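(* Let $\mathcal T$ be a triangulation of $S_g$ with vertex set $V$ and $d$ a hyperbolic cone-metric on $S_g$ with $V(d)\subseteq V$ realizing $\mathcal T$. For $t\in[1,+\infty)$ let $d_t$ be the hyperbolic cone-metric realizing $\mathcal T$ with edge lengths $l_e(d_t)=t\cdot l_e(d)$ for every edge $e$ of $\mathcal T$. Then, for every $v\in V$, the total angle $\lambda_v(d_t)$ is strictly decreasing in $t$.
   Context: $S_g$ is a closed oriented surface. A triangulation $\mathcal T$ with vertex set $V$ is an isotopy class relative to $V$ of topological triangulations with vertices $V$ (loops and multiple edges allowed). A hyperbolic cone-metric is locally hyperbolic except at finitely many conical points $V(d)$; it realizes $\mathcal T$ if some representative has geodesic edges. A metric realizing $\mathcal T$ is determined by its edge lengths, and any assignment of positive edge lengths satisfying the strict triangle inequalities in every triangle of $\mathcal T$ defines such a metric (by gluing hyperbolic triangles). $\lambda_v(d)$ denotes the total angle at $v$. *)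

(* Defs.v *)
From HB Require Import structures.
From mathcomp Require Import all_boot all_order all_algebra.
From mathcomp Require Import all_classical all_reals all_analysis.
Set Implicit Arguments. Unset Strict Implicit. Unset Printing Implicit Defensive.
Import Order.TTheory GRing.Theory Num.Theory.
Local Open Scope ring_scope.

(* Combinatorial data of a triangulation T of a closed surface with vertex *)
(* set V (loops and multiple edges allowed).  A triangulation is given by   *)
(* its finitely many triangles; triangle f has corners 0,1,2 at vertices    *)
(* tvert f i, and side i (the side opposite corner i) is the edge           *)
(* tedge f i.  Every edge is a side of exactly two triangle-sides (closed   *)
(* surface), the two sides glued along an edge have the same endpoints, and *)
(* every vertex of V is a corner of some triangle.                          *)

Definition nxt (i : 'I_3) : 'I_3 := inZp i.+1.
Definition prv (i : 'I_3) : 'I_3 := inZp i.+2.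

Record triangulation := Triangulation {
  tV : finType;
  tE : finType;
  tF : finType;
  tedge : tF -> 'I_3 -> tE;         (* side opposite corner i *)
  tvert : tF -> 'I_3 -> tV;
  tedge_two_sides : forall e : tE,
    #|[set p : tF * 'I_3 | tedge p.1 p.2 == e]| = 2;
  tedge_ends : forall (f g : tF) (i j : 'I_3), tedge f i = tedge g j ->
    perm_eq [:: tvert f (nxt i); tvert f (prv i)]
            [:: tvert g (nxt j); tvert g (prv j)];
  tvert_covered : forall v : tV, exists f i, tvert f i = v
}.

Definition cosh {R : realType} (x : R) : R := (expR x + expR (- x)) / 2.
Definition sinh {R : realType} (x : R) : R := (expR x - expR (- x)) / 2.

(* A hyperbolic cone-metric realizing T is given by its edge lengths:      *)
(* positive and satisfying the strict triangle inequalities in every       *)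
(* triangle of T.                                                          *)
Definition realizing_lengths {R : realType} (T : triangulation)
    (l : tE T -> R) : Prop :=
  (forall e, 0 < l e) /\
  (forall (f : tF T) (i : 'I_3),
     l (tedge f i) < l (tedge f (nxt i)) + l (tedge f (prv i))).

(* Angle of a hyperbolic triangle with side lengths a (opposite), b, c,    *)
(* by the hyperbolic law of cosines.                                       *)
Definition hyp_angle {R : realType} (a b c : R) : R :=
  acos ((cosh b * cosh c - cosh a) / (sinh b * sinh c)).

Definition corner_angle {R : realType} (T : triangulation) (l : tE T -> R)
    (f : tF T) (i : 'I_3) : R :=
  hyp_angle (l (tedge f i)) (l (tedge f (nxt i))) (l (tedge f (prv i))).

Definition total_angle {R : realType} (T : triangulation) (l : tE T -> R)
    (v : tV T) : R :=
  \sum_(p : tF T * 'I_3 | tvert p.1 p.2 == v) corner_angle l p.1 p.2.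

(* Main.v *)
Require Import Defs.
From HB Require Import structures.
From mathcomp Require Import all_boot all_order all_algebra.
From mathcomp Require Import all_classical all_reals all_analysis.
From mathcomp Require Import ring lra.
Import Order.TTheory GRing.Theory Num.Theory.
Local Open Scope ring_scope.
Section S.
Variable R : realType.

Lemma is_derive_expRk (k x : R) :
  is_derive x 1 (fun y => expR (k * y)) (k * expR (k * x)).
Proof.
have h1 : is_derive x 1 (fun y : R => k * y) k.
  have := @is_deriveZ R R R id k x 1 1 (is_derive_id x 1).
  by rewrite /GRing.scale /= mulr1.
have := is_derive1_comp (is_derive_expR (k * x)) h1.
by rewrite mulrC.
Qed.

Lemma is_derive_sinhk (k x : R) :
  is_derive x 1 (fun y => sinh (k * y)) (k * cosh (k * x)).
Proof.
have -> : (fun y => sinh (k * y)) =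
  (2^-1 : R) \*: ((fun y => expR (k * y)) - (fun y => expR ((- k) * y))).
  apply/funext => y; rewrite /sinh /=. by rewrite /GRing.scale_fun /GRing.scale /= !fctE mulNr mulrC.
apply: is_derive_eq.
rewrite /cosh /GRing.scale /= mulNr.
by field.
Qed.

Lemma is_derive_coshk (k x : R) :
  is_derive x 1 (fun y => cosh (k * y)) (k * sinh (k * x)).
Proof.
have -> : (fun y => cosh (k * y)) =
  (2^-1 : R) \*: ((fun y => expR (k * y)) + (fun y => expR ((- k) * y))).
  by apply/funext => y; rewrite /cosh /GRing.scale_fun /GRing.scale /= !fctE mulNr mulrC.
apply: is_derive_eq.
rewrite /sinh /GRing.scale /= !mulNr.
by field.
Qed.

Lemma sinh_gt0 (z : R) : 0 < z -> 0 < sinh z.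
Proof.
move=> hz; rewrite /sinh divr_gt0 // subr_gt0 ltr_expR.
by rewrite -subr_gt0 opprK -mulr2n mulrn_wgt0.
Qed.

Lemma cosh_gt0 (z : R) : 0 < cosh z.
Proof. by rewrite /cosh divr_gt0 // addr_gt0 // expR_gt0. Qed.


Lemma incr_glob (f df : R -> R) (a b : R) : (forall x : R, is_derive x 1 f (df x)) ->
  (forall x, a < x < b -> 0 < df x) -> a < b -> f a < f b.
Proof.
move=> hd hpos ab.
apply: (@gtr0_derive1_lt_cc R f a b).
- by move=> x _; have [] := hd x.
- move=> x; rewrite in_itv /= => hx; rewrite derive1E.
  by have [_ ->] := hd x; apply: hpos.
- by apply: derivable_within_continuous => x _; by have [] := hd x.
- by rewrite in_itv /= lexx (ltW ab).
- by rewrite in_itv /= lexx (ltW ab).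
- exact: ab.
Qed.

Lemma decr_oo (f df : R -> R) (a b : R) :
  (forall x : R, a < x < b -> is_derive x 1 f (df x)) ->
  (forall x, a < x < b -> df x < 0) ->
  forall x y, a < x -> x < y -> y < b -> f y < f x.
Proof.
move=> hd hneg x y ax xy yb.
apply: (@ltr0_derive1_lt_oo R f a b).
- by move=> z; rewrite in_itv /= => hz; by have [] := hd z hz.
- move=> z; rewrite in_itv /= => hz; rewrite derive1E.
  by have [_ ->] := hd z hz; apply: hneg.
- move=> z; rewrite inE /= in_itv /= => hz.
  apply/differentiable_continuous/derivable1_diffP.
  by have [] := hd z hz.
- by rewrite in_itv /= yb (lt_trans ax xy).
- by rewrite in_itv /= ax (lt_trans xy yb).
- exact: xy.
Qed.


Local Existing Instance is_derive_sinhk.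
Local Existing Instance is_derive_coshk.

Lemma sinh0 : sinh (0 : R) = 0.
Proof. by rewrite /sinh oppr0 subrr mul0r. Qed.

Lemma psi_pos (lam u : R) : 0 < lam < 1 -> 0 < u ->
  lam * cosh (lam * u) * sinh u < sinh (lam * u) * cosh u.
Proof.
move=> /andP[l0 l1] u0.
pose psi := (fun y => sinh (lam * y)) * (fun y => cosh (1 * y))
   - lam \*: ((fun y => cosh (lam * y)) * (fun y => sinh (1 * y))).
have hd : forall x : R, is_derive x 1 psi ((1 - lam ^+ 2) * sinh (lam * x) * sinh (1 * x)).
  move=> x; rewrite /psi; apply: is_derive_eq.
  rewrite /GRing.scale /=.
  by ring.
have := @incr_glob psi _ 0 u hd _ u0.
have -> : psi 0 = 0.
  by rewrite /psi /GRing.scale_fun /GRing.scale /= !fctE !mulr0 sinh0 !mul0r !mulr0 subr0.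
have -> : psi u = sinh (lam * u) * cosh u - lam * cosh (lam * u) * sinh u.
  by rewrite /psi /GRing.scale_fun /GRing.scale /= !fctE !mul1r; ring.
rewrite subr_gt0; apply.
move=> x /andP[x0 xu].
have h1 : 0 < 1 - lam ^+ 2.
  by rewrite subr_gt0 expr2 -[1]mulr1 ltr_pM // ltW.
rewrite mul1r; apply: mulr_gt0; [apply: mulr_gt0 =>//|]; apply: sinh_gt0 => //; exact: mulr_gt0.
Qed.


Lemma phi_decr (lam u w : R) : 0 < lam < 1 -> 0 < u -> u < w ->
  sinh (lam * w) / sinh w < sinh (lam * u) / sinh u.
Proof.
move=> hl u0 uw.
pose phi : R -> R := (fun y => sinh (lam * y)) * (fun y => (sinh (1 * y))^-1).
have hd : forall x : R, 0 < x < w + 1 -> is_derive x 1 phi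
   ((lam * cosh (lam * x) * sinh x - sinh (lam * x) * cosh x) / (sinh x) ^+ 2).
  move=> x /andP[x0 _].
  have sx : sinh (1 * x) != 0 by rewrite gt_eqF // sinh_gt0 // mul1r.
  have hV := @is_deriveV R (fun y => sinh (1 * y)) x _ 1 sx (is_derive_sinhk 1 x).
  rewrite /phi; apply: is_derive_eq.
  rewrite /GRing.scale /= !mul1r.
  rewrite mul1r in sx.
  by field.
have := @decr_oo phi _ 0 (w + 1) hd _ u w u0 uw.
move=> H; have : phi w < phi u.
  apply: H; last by rewrite ltrDl.
  move=> x /andP[x0 _].
  rewrite pmulr_llt0 ?subr_lt0 ?psi_pos //.
  by rewrite invr_gt0 exprn_gt0 // sinh_gt0.
by rewrite /phi !fctE !mul1r.
Qed.


Lemma ratio_decr (q r s t : R) : 0 < q -> 0 < r -> 0 < s -> s < t ->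
  sinh (t * q) / sinh (t * q + t * r) < sinh (s * q) / sinh (s * q + s * r).
Proof.
move=> q0 r0 s0 st.
have qr0 : 0 < q + r by rewrite addr_gt0.
have hl : 0 < q / (q + r) < 1.
  by rewrite divr_gt0 //= ltr_pdivrMr // mul1r ltrDl.
have h2 : s * (q + r) < t * (q + r) by rewrite ltr_pM2r.
have := @phi_decr _ _ _ hl (mulr_gt0 s0 qr0) h2.
have e : forall z : R, q / (q + r) * (z * (q + r)) = z * q.
  by move=> z; field; rewrite gt_eqF.
by rewrite !e !mulrDr.
Qed.

Lemma idA (P Q Z : R) :
  cosh (Q + Z) * cosh (P + Z) - cosh (P + Q) =
  sinh (Q + Z) * sinh (P + Z) - 2 * sinh Q * sinh P.
Proof.
rewrite /cosh /sinh !opprD !expRD !expRN.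
have hP := expR_gt0 P; have hQ := expR_gt0 Q; have hZ := expR_gt0 Z.
by field; rewrite ?gt_eqF.
Qed.

Lemma idB (P Q Z : R) :
  cosh (Q + Z) * cosh (P + Z) - cosh (P + Q) + sinh (Q + Z) * sinh (P + Z) =
  2 * sinh (P + Q + Z) * sinh Z.
Proof.
rewrite /cosh /sinh !opprD !expRD !expRN.
have hP := expR_gt0 P; have hQ := expR_gt0 Q; have hZ := expR_gt0 Z.
by field; rewrite ?gt_eqF.
Qed.


Lemma acos_decr (x y : R) : -1 <= x -> x < y -> y <= 1 -> acos y < acos x.
Proof.
move=> hx xy hy.
have hx' : -1 <= x <= 1 by rewrite hx (le_trans (ltW xy) hy).
have hy' : -1 <= y <= 1 by rewrite hy andbT (le_trans hx (ltW xy)).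
have ix : acos x \in `[0, pi] by rewrite in_itv /= acos_ge0 // acos_lepi.
have iy : acos y \in `[0, pi] by rewrite in_itv /= acos_ge0 // acos_lepi.
rewrite -(ltr_cos iy ix) !acosK //; by rewrite in_itv.
Qed.


Definition Xc (p q r u : R) :=
  (cosh (u * q + u * r) * cosh (u * p + u * r) - cosh (u * p + u * q)) /
  (sinh (u * q + u * r) * sinh (u * p + u * r)).

Lemma Xc_eq (p q r u : R) : 0 < p -> 0 < q -> 0 < r -> 0 < u ->
  Xc p q r u = 1 - 2 * ((sinh (u * q) / sinh (u * q + u * r)) *
                     (sinh (u * p) / sinh (u * p + u * r))).
Proof.
move=> p0 q0 r0 u0.
have h1 : 0 < sinh (u * q + u * r) by rewrite sinh_gt0 // addr_gt0 // mulr_gt0.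
have h2 : 0 < sinh (u * p + u * r) by rewrite sinh_gt0 // addr_gt0 // mulr_gt0.
rewrite /Xc idA; field.
by rewrite !gt_eqF.
Qed.

Lemma Xc_bounds (p q r u : R) : 0 < p -> 0 < q -> 0 < r -> 0 < u ->
  -1 < Xc p q r u < 1.
Proof.
move=> p0 q0 r0 u0.
have h1 : 0 < sinh (u * q + u * r) by rewrite sinh_gt0 // addr_gt0 // mulr_gt0.
have h2 : 0 < sinh (u * p + u * r) by rewrite sinh_gt0 // addr_gt0 // mulr_gt0.
have h3 : 0 < sinh (u * q) by rewrite sinh_gt0 // mulr_gt0.
have h4 : 0 < sinh (u * p) by rewrite sinh_gt0 // mulr_gt0.
have h5 : 0 < sinh (u * r) by rewrite sinh_gt0 // mulr_gt0.
have h6 : 0 < sinh (u * p + u * q + u * r).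
  by rewrite sinh_gt0 // !addr_gt0 // mulr_gt0.
apply/andP; split.
  have e : Xc p q r u + 1 = 2 * sinh (u * p + u * q + u * r) * sinh (u * r) /
      (sinh (u * q + u * r) * sinh (u * p + u * r)).
    rewrite -idB /Xc; field.
    by rewrite !gt_eqF.
  rewrite -subr_gt0 opprK e; apply: divr_gt0; last exact: mulr_gt0.
  by apply: mulr_gt0 => //; apply: mulr_gt0.
rewrite Xc_eq // -subr_gt0 opprB addrCA subrr addr0.
apply: mulr_gt0 => //; apply: mulr_gt0; exact: divr_gt0.
Qed.

Lemma angle_core (p q r s t : R) : 0 < p -> 0 < q -> 0 < r -> 0 < s -> s < t ->
  hyp_angle (t * p + t * q) (t * q + t * r) (t * p + t * r) <
  hyp_angle (s * p + s * q) (s * q + s * r) (s * p + s * r).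
Proof.
move=> p0 q0 r0 s0 st.
have t0 : 0 < t by apply: lt_trans st.
rewrite /hyp_angle.
apply: acos_decr.
- by have /andP[/ltW] := @Xc_bounds p q r s p0 q0 r0 s0.
- rewrite -/(Xc p q r s) -/(Xc p q r t).
  rewrite !Xc_eq // ltrD2l ltrN2 ltr_pM2l //.
  have a1 := @ratio_decr q r s t q0 r0 s0 st.
  have a2 := @ratio_decr p r s t p0 r0 s0 st.
  have b1 : 0 < sinh (t * q) / sinh (t * q + t * r).
    by rewrite divr_gt0 // sinh_gt0 // ?addr_gt0 // mulr_gt0.
  have b2 : 0 < sinh (t * p) / sinh (t * p + t * r).
    by rewrite divr_gt0 // sinh_gt0 // ?addr_gt0 // mulr_gt0.
  by apply: ltr_pM => //; apply: ltW.
- by have /andP[_ /ltW] := @Xc_bounds p q r t p0 q0 r0 t0.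
Qed.


Lemma angle_abc (a b c s t : R) : 0 < s -> s < t ->
  a < b + c -> b < c + a -> c < a + b ->
  hyp_angle (t * a) (t * b) (t * c) < hyp_angle (s * a) (s * b) (s * c).
Proof.
move=> s0 st h1 h2 h3.
have p0 : 0 < (a - b + c) / 2 by apply: divr_gt0 => //; lra.
have q0 : 0 < (a + b - c) / 2 by apply: divr_gt0 => //; lra.
have r0 : 0 < (b + c - a) / 2 by apply: divr_gt0 => //; lra.
have := @angle_core _ _ _ s t p0 q0 r0 s0 st.
have e1 : forall u : R, u * ((a - b + c) / 2) + u * ((a + b - c) / 2) = u * a.
  by move=> u; field.
have e2 : forall u : R, u * ((a + b - c) / 2) + u * ((b + c - a) / 2) = u * b.
  by move=> u; field.
have e3 : forall u : R, u * ((a - b + c) / 2) + u * ((b + c - a) / 2) = u * c.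
  by move=> u; field.
by rewrite !e1 !e2 !e3.
Qed.

End S.

Lemma nxt_nxt (i : 'I_3) : nxt (nxt i) = prv i.
Proof. by case: i => [[|[|[|//]]] Hi]; apply: val_inj. Qed.
Lemma prv_nxt (i : 'I_3) : prv (nxt i) = i.
Proof. by case: i => [[|[|[|//]]] Hi]; apply: val_inj. Qed.
Lemma nxt_prv (i : 'I_3) : nxt (prv i) = i.
Proof. by case: i => [[|[|[|//]]] Hi]; apply: val_inj. Qed.
Lemma prv_prv (i : 'I_3) : prv (prv i) = nxt i.
Proof. by case: i => [[|[|[|//]]] Hi]; apply: val_inj. Qed.

Theorem lemma2p3p9 (R : realType) (T : triangulation) (l : tE T -> R)
  (hl : realizing_lengths l) (v : tV T) (s t : R) :
  1 <= s -> s < t ->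
  total_angle (fun e => t * l e) v < total_angle (fun e => s * l e) v.
Proof.
move=> s1 st.
have s0 : 0 < s by apply: lt_le_trans s1.
case: hl => lpos ltri.
rewrite /total_angle; apply: ltr_sum.
  have [f [i fi]] := tvert_covered v.
  apply/hasP; exists (f, i); first by rewrite mem_index_enum.
  by rewrite /= fi.
move=> [f i] _; rewrite /corner_angle /=.
apply: angle_abc => //.
- by have := ltri f (nxt i); rewrite nxt_nxt prv_nxt.
- by have := ltri f (prv i); rewrite nxt_prv prv_prv addrC.
Qed.
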